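(* Let $X$ be a Polish space (complete separable metric space with metric $d$) and $f:X\to X$ a continuous map. If for some $\delta>0$ the map $f$ has an uncountable $\delta$-scrambled set, then $f$ has an expansive measure, i.e., there are a Borel probability measure $\mu$ on $X$ and $\epsilon>0$ such that $\mu(\Phi_\epsilon(x))=0$ for all $x\in X$.
   Context: Here $\Phi_\epsilon(x)=\{y\in X: d(f^i(y),f^i(x))\le\epsilon \text{ for all } i\in\mathbb{N}\}$, $\mathbb{N}=\{0,1,2,\dots\}$. For $\delta\ge0$, a $\delta$-scrambled set of $f$ is a subset $S\subset X$ such that for all distinct $x,y\in S$: $\liminf_{n\to\infty}d(f^n(x),f^n(y))=0$ and $\limsup_{n\to\infty}d(f^n(x),f^n(y))>\delta$. *)

(* Defs.v *)
From HB Require Import structures.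
From mathcomp Require Import all_boot all_order all_algebra.
From mathcomp Require Import all_classical all_reals all_analysis.
Set Implicit Arguments. Unset Strict Implicit. Unset Printing Implicit Defensive.
Import Order.TTheory GRing.Theory Num.Theory.
Local Open Scope classical_set_scope.
Local Open Scope ring_scope.

(* Nonempty (pointed) metric spaces: needed because MathComp-Analysis builds
   generated sigma-algebras (g_sigma_algebraType) only on pointed types.
   Nonemptiness is implied by the theorem's hypothesis (uncountable S). *)
#[short(type="pmetricType")]
HB.structure Definition PointedMetric (K : numDomainType) :=
  { M of Metric K M & isPointed M }.

Definition complete_metric {R : realType} (X : metricType R) : Prop :=
  forall u : nat -> X,
    (forall eps : R, 0 < eps -> exists N : nat,
        forall m n : nat, (N <= m)%N -> (N <= n)%N -> mdist (u m) (u n) < eps) ->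
    exists l : X, u @ \oo --> l.

Definition separable_space {R : realType} (X : metricType R) : Prop :=
  exists D : set X, countable D /\ dense D.

Definition polish {R : realType} (X : metricType R) : Prop :=
  complete_metric X /\ separable_space X.

Definition Phi {R : realType} {X : metricType R} (f : X -> X) (eps : R) (x : X)
  : set X := [set y | forall i : nat, mdist (iter i f y) (iter i f x) <= eps].

Definition scrambled {R : realType} {X : metricType R} (f : X -> X) (delta : R)
  (S : set X) : Prop :=
  forall x y, S x -> S y -> x <> y ->
    limn_einf (fun n => (mdist (iter n f x) (iter n f y))%:E) = 0%E /\
    (delta%:E < limn_esup (fun n => (mdist (iter n f x) (iter n f y))%:E))%E.

Notation borel_of X := (g_sigma_algebraType (@open X)).

(* Main.v *)
Require Import Defs.
From HB Require Import structures.
From mathcomp Require Import all_boot all_order all_algebra.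
From mathcomp Require Import all_classical all_reals all_analysis.
From mathcomp Require Import ring lra.
Import Order.TTheory GRing.Theory Num.Theory.
Local Open Scope classical_set_scope.
Local Open Scope ring_scope.

Lemma countableU_aux {T} {A B : set T} :
  countable A -> countable B -> countable (A `|` B).
Proof.
move=> cA cB.
have -> : A `|` B = \bigcup_(b in [set: bool]) (if b then A else B).
  apply/seteqP; split => x.
    by case=> H; [exists true|exists false].
  by case=> -[] _ H; [left|right].
apply: bigcup_countable; first exact: countableP.
by move=> [] _.
Qed.

Lemma aux_tri {R : realType} (a b c e r : R) :
  a <= b + c -> b < e -> c < e -> e < r / 2 -> a < r.
Proof. lra. Qed.

Section Aux.
Context {R : realType} {X : pmetricType R}.
Import metricType_numDomainType.

Lemma inv_small (e : R) : 0 < e -> exists n : nat, n.+1%:R^-1 < e.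
Proof.
move=> e0; exists (Num.truncn e^-1).
rewrite -[X in _ < X]invrK ltf_pV2 ?posrE ?invr_gt0 //.
exact: truncnS_gt.
Qed.

Lemma mdist_open (y : X) (r : R) : 0 < r ->
  exists O : set X, open O /\ O y /\ O `<=` [set z | mdist y z < r].
Proof.
move=> r0; exists (interior (ball y r)); split; first exact: open_interior.
split; first exact: nbhsx_ballx.
by move=> z /interior_subset; rewrite ballEmdist.
Qed.

Lemma perfect_core (S : set X) : separable_space X -> ~ countable S ->
  exists S' : set X, S' `<=` S /\ (exists y, S' y) /\
    forall y, S' y -> forall r, 0 < r ->
      exists z, S' z /\ z <> y /\ mdist y z < r.
Proof.
move=> [D [cD dD]] ncS.
pose S' := [set y | S y /\ forall r : R, 0 < r ->
   ~ countable (S `&` [set z | mdist y z < r])].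
pose B := fun i : X * nat => S `&` [set z | mdist i.1 z < i.2.+1%:R^-1].
pose I := [set i : X * nat | D i.1 /\ countable (B i)].
have cBig : countable (\bigcup_(i in I) B i).
  apply: bigcup_countable; last by move=> i [].
  apply: sub_countable (countableX cD (countableP [set: nat])).
  by apply: subset_card_le => i [Di _]; split.
have sub : S `\` S' `<=` \bigcup_(i in I) B i.
  move=> y [Sy nS'y].
  have [r r0 cr] : exists2 r : R, 0 < r &
      countable (S `&` [set z | mdist y z < r]).
    apply: contrapT => H; apply: nS'y; split => // r r0 cr; apply: H.
    by exists r.
  have r20 : 0 < r / 2 by lra.
  have [n hn] := @inv_small (r / 2) r20.
  have e0 : 0 < n.+1%:R^-1 :> R by rewrite invr_gt0.
  have [U0 [oU0 [U0y U0B]]] := @mdist_open y _ e0.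
  have [w [Ow Dw]] := dD U0 (ex_intro _ y U0y) oU0.
  have yw := U0B _ Ow.
  exists (w, n) => /=.
    split => //; apply: sub_countable cr; apply: subset_card_le.
    move=> z [Sz /= dz]; split => //=.
    rewrite /= in dz yw.
    have H := metric_triangle y w z.
    exact: (@aux_tri R _ _ _ _ _ H yw dz hn).
  by split => //=; rewrite metric_sym.
have cSS' : countable (S `\` S') := sub_countable (subset_card_le sub) cBig.
have ncS' : ~ countable S'.
  move=> cS'; apply: ncS.
  have H : S `<=` S' `|` (S `\` S').
    move=> y Sy.
    by case: (pselect (S' y)) => H; [left|right].
  exact: (sub_countable (subset_card_le H) (countableU_aux cS' cSS')).
exists S'; split; first by move=> y [].
split.
  apply: contrapT => ne; apply: ncS'.
  have -> : S' = set0 by apply/seteqP; split => // y S'y; apply: ne; exists y.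
  exact: countable0.
move=> y [Sy Hy] r r0; apply: contrapT => nz; apply: (Hy r r0).
have H : S `&` [set z | mdist y z < r] `<=` [set y] `|` (S `\` S').
  move=> z [Sz dz].
  case: (pselect (z = y)) => [->|zy]; first by left.
  right; split => // S'z; apply: nz; exists z; split => //.
exact: (sub_countable (subset_card_le H) (countableU_aux (countable1 y) cSS')).
Qed.

End Aux.

Lemma aux_sep {R : realType} (d0 dl a c delta eta : R) :
  eta = (d0 - delta) / 2 ->
  d0 <= a + dl + c -> a < eta -> c < eta -> delta < dl.
Proof. lra. Qed.

Lemma aux_a1 {R : realType} (a b r : R) : a < r / 2 -> b <= r / 4 -> 0 < r -> a + b <= r.
Proof. lra. Qed.
Lemma aux_a2 {R : realType} (b r : R) : b <= r / 4 -> 0 < r -> b <= r / 2.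
Proof. lra. Qed.
Lemma aux_a3 {R : realType} (b r : R) : b <= r / 4 -> 0 < r -> b <= r.
Proof. lra. Qed.
Lemma aux_a4 {R : realType} (a b r : R) : a <= b -> b <= r / 2 -> 0 < r -> a < r.
Proof. lra. Qed.
Lemma aux_a5 {R : realType} (d a x dl c : R) : d <= a + x -> x <= dl + c -> d <= a + dl + c.
Proof. lra. Qed.

Section Aux2.
Context {R : realType} {X : pmetricType R}.
Import metricType_numDomainType.

Lemma limsup_gt (u : nat -> R) (delta : R) :
  (delta%:E < limn_esup (fun n => (u n)%:E))%E -> exists n, delta < u n.
Proof.
move=> H; apply: contrapT => nH.
have le : forall n, u n <= delta.
  move=> n; rewrite leNgt; apply/negP => h; apply: nH; by exists n.
have : (limn_esup (fun n => (u n)%:E) <= delta%:E)%E.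
  rewrite limn_esup_lim; apply: lime_le; first exact: is_cvg_esups.
  apply: nearW => n; apply: ge_ereal_sup => _ [m _ <-].
  by rewrite lee_fin.
by rewrite leNgt H.
Qed.

Lemma continuous_iter (f : X -> X) n : continuous f -> continuous (iter n f).
Proof.
move=> cf; elim: n => [|n IH] x /=; first exact: cvg_id.
exact: (continuous_comp (IH x) (cf _)).
Qed.

Lemma cont_ball (F : X -> X) (c : X) (eta : R) : continuous F -> 0 < eta ->
  exists2 rho : R, 0 < rho & forall y, mdist c y < rho -> mdist (F c) (F y) < eta.
Proof.
move=> cF eta0.
have := cvgr_dist_lt (cF c) eta0.
move=> /(_ (nbhs_filter c)) /(proj1 (nbhs_mdistP _ _)) [rho rho0 H]; exists rho => // y cy.
Qed.

Lemma step_exists (S' : set X) (f : X -> X) (delta : R) :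
 continuous f ->
 (forall y z, S' y -> S' z -> y <> z -> exists n, delta < mdist (iter n f y) (iter n f z)) ->
 (forall y, S' y -> forall r, 0 < r -> exists z, S' z /\ z <> y /\ mdist y z < r) ->
 exists step : X * R -> bool -> X * R, forall p, S' p.1 -> 0 < p.2 ->
   (forall j, S' (step p j).1 /\ 0 < (step p j).2 /\
      mdist p.1 (step p j).1 + (step p j).2 <= p.2 /\ (step p j).2 <= p.2 / 2) /\
   exists n, forall y z, mdist (step p false).1 y <= (step p false).2 ->
     mdist (step p true).1 z <= (step p true).2 ->
     delta < mdist (iter n f y) (iter n f z).
Proof.
move=> cf sep perf.
pose Good (p : X * R) (q : (X * R) * (X * R)) :=
  (forall j, S' (if j then q.2 else q.1).1 /\ 0 < (if j then q.2 else q.1).2 /\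
      mdist p.1 (if j then q.2 else q.1).1 + (if j then q.2 else q.1).2 <= p.2 /\
      (if j then q.2 else q.1).2 <= p.2 / 2) /\
   exists n, forall y z, mdist q.1.1 y <= q.1.2 ->
     mdist q.2.1 z <= q.2.2 ->
     delta < mdist (iter n f y) (iter n f z).
suff H : forall p : X * R, exists q, S' p.1 -> 0 < p.2 -> Good p q.
  have [g gP] := choice H.
  exists (fun p j => if j then (g p).2 else (g p).1) => p Sp rp.
  have [G1 G2] := gP p Sp rp; split; first exact: G1.
  exact: G2.
move=> [c r]; case: (pselect (S' c /\ 0 < r)); last first.
  by move=> N; exists ((c, r), (c, r)) => Sc r0; exfalso; apply: N.
move=> [Sc r0].
have r20 : 0 < r / 2 by rewrite divr_gt0.
have [c' [Sc' [c'c dcc']]] := perf c Sc (r / 2) r20.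
have [n hn] := sep c c' Sc Sc' (nesym c'c).
pose F := iter n f.
have cF : continuous F by exact: continuous_iter.
pose eta := (mdist (F c) (F c') - delta) / 2.
have eta0 : 0 < eta by rewrite divr_gt0 // subr_gt0.
have [rho1 rho10 H1] := cont_ball F c eta cF eta0.
have [rho2 rho20 H2] := cont_ball F c' eta cF eta0.
pose r' := Num.min (r / 4) (Num.min (rho1 / 2) (rho2 / 2)).
have r'0 : 0 < r' by rewrite !lt_min !divr_gt0.
have r'1 : r' <= r / 4 by rewrite ge_min lexx.
have r'2 : r' <= rho1 / 2 by rewrite !ge_min lexx orbT.
have r'3 : r' <= rho2 / 2 by rewrite !ge_min lexx !orbT.
exists ((c, r'), (c', r')) => _ _; split.
  move=> [] /=; split => //; split => //; split.
  - exact: (@aux_a1 R _ _ _ dcc' r'1 r0).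
  - exact: (@aux_a2 R _ _ r'1 r0).
  - rewrite mdistxx add0r; exact: (@aux_a3 R _ _ r'1 r0).
  - exact: (@aux_a2 R _ _ r'1 r0).
exists n => y z /= cy c'z.
have Fy := H1 y (@aux_a4 R _ _ _ cy r'2 rho10).
have Fz := H2 z (@aux_a4 R _ _ _ c'z r'3 rho20).
rewrite metric_sym in Fz.
have T1 := metric_triangle (F c) (F y) (F c').
have T2 := metric_triangle (F y) (F z) (F c').
have T3 := @aux_a5 R _ _ _ _ _ T1 T2.
have E : eta = (mdist (F c) (F c') - delta) / 2 by [].
exact: (@aux_sep R _ _ _ _ delta eta E T3 Fy Fz).
Qed.

End Aux2.

Lemma aux_c1 {R : realType} (x a b r1 r2 r0 : R) :
  x <= a + b -> a + r1 <= r0 -> b + r2 <= r1 -> x + r2 <= r0.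
Proof. lra. Qed.
Lemma aux_c2 {R : realType} (a m p e : R) : a < m * e -> m <= p -> 0 < e -> a < e * p.
Proof. nra. Qed.
Lemma aux_c3 {R : realType} (x a b r e : R) : x <= a + b -> a <= r -> b <= r -> r < e / 2 -> x < e.
Proof. lra. Qed.
Lemma aux_c4 {R : realType} (x a b r e : R) : x <= a + b -> a <= r -> b < e -> x <= r + e.
Proof. lra. Qed.
Lemma aux_c5 {R : realType} (a b c d : R) : a + b <= c -> 0 < b -> c <= d -> a <= d.
Proof. lra. Qed.

Section Aux3.
Context {R : realType} {X : pmetricType R}.
Import metricType_numDomainType.

Lemma small_pow (a e : R) : 0 < e -> exists k : nat, a / 2 ^+ k < e.
Proof.
move=> e0; exists (Num.truncn (a / e)).+1.
rewrite ltr_pdivrMr ?exprn_gt0 //.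
have h1 := truncnS_gt (a / e); rewrite ltr_pdivrMr // in h1.
have h2 : (Num.truncn (a / e)).+1%:R <= 2 ^+ (Num.truncn (a / e)).+1 :> R.
  by rewrite -natrX ler_nat ltnW // ltn_expl.
exact: (@aux_c2 R _ _ _ _ h1 h2 e0).
Qed.

Variable C : nat -> X * R.
Hypothesis H0 : forall k, 0 < (C k).2.
Hypothesis H1 : forall k, mdist (C k).1 (C k.+1).1 + (C k.+1).2 <= (C k).2.
Hypothesis H2 : forall k, (C k.+1).2 <= (C k).2 / 2.

Lemma chain_dist k m : mdist (C k).1 (C (k + m)%N).1 + (C (k + m)%N).2 <= (C k).2.
Proof.
elim: m => [|m IH]; first by rewrite addn0 mdistxx add0r lexx.
rewrite addnS.
exact: (@aux_c1 R _ _ _ _ _ _ (metric_triangle (C k).1 (C (k + m)%N).1 (C (k + m).+1).1) IH (H1 (k + m))).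
Qed.

Lemma chain_dist' {k n} : (k <= n)%N -> mdist (C k).1 (C n).1 <= (C k).2.
Proof.
move=> kn; have := chain_dist k (n - k); rewrite subnKC // => h.
exact: (@aux_c5 R _ _ _ _ h (H0 n) (lexx _)).
Qed.

Lemma chain_rad k : (C k).2 <= (C 0%N).2 / 2 ^+ k.
Proof.
elim: k => [|k IH]; first by rewrite expr0 divr1.
apply: (le_trans (H2 k)).
have -> : (C 0%N).2 / 2 ^+ k.+1 = (C 0%N).2 / 2 ^+ k / 2.
  by rewrite exprS invfM [(2:R)^-1 * _]mulrC mulrA.
by rewrite ler_pdivlMr // divfK // ?pnatr_eq0 //.
Qed.

Lemma chain_limit : complete_metric X ->
  exists l : X, forall k, mdist (C k).1 l <= (C k).2.
Proof.
move=> cX.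
have [l ul] : exists l : X, (fun k => (C k).1) @ \oo --> l.
  apply: cX => eps eps0.
  have eps20 : 0 < eps / 2 by rewrite divr_gt0.
  have [N hN] := small_pow (C 0%N).2 (eps / 2) eps20.
  exists N => m n Nm Nn.
  have hm := chain_dist' Nm; have hn := chain_dist' Nn.
  rewrite metric_sym in hm.
  have hr := le_lt_trans (chain_rad N) hN.
  exact: (@aux_c3 R _ _ _ _ _ (metric_triangle (C m).1 (C N).1 (C n).1) hm hn hr).
exists l => k; apply/ler_addgt0Pr => e e0.
have := cvgr_dist_lt ul e0.
move=> /(_ eventually_filter) [N _ HN].
have hk := @chain_dist' k (maxn N k) (leq_maxr _ _).
have hl : mdist l (C (maxn N k)).1 < e by apply: HN; exact: leq_maxl.
rewrite metric_sym in hl.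
exact: (@aux_c4 R _ _ _ _ _ (metric_triangle (C k).1 (C (maxn N k)).1 l) hk hl).
Qed.

Lemma chain_open (l : X) : (forall k, mdist (C k).1 l <= (C k).2) ->
  forall U : set X, open U ->
  (U l <-> exists k, forall y, mdist (C k).1 y <= (C k).2 -> U y).
Proof.
move=> hl U oU; split; last by move=> [k hk]; exact: hk.
move=> Ul.
have : nbhs l U by apply: open_nbhs_nbhs; split.
move=> /(proj1 (nbhs_mdistP _ _)) [e e0 He].
have e20 : 0 < e / 2 by rewrite divr_gt0.
have [k hk] := small_pow (C 0%N).2 (e / 2) e20.
exists k => y hy; apply: He => /=.
have hr := le_lt_trans (chain_rad k) hk.
have hlk := hl k; rewrite metric_sym in hlk.
exact: (@aux_c3 R _ _ _ _ _ (metric_triangle l (C k).1 y) hlk hy hr).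
Qed.

End Aux3.

Lemma aux_d1 {R : realType} (x y : R) : x < y -> x * 2 < y * 2.
Proof. lra. Qed.

Lemma aux_d2 {R : realType} (s t A m : R) : 0 < A -> 2 / A < t - s ->
  m <= s / 2 * A -> t / 2 * A < m + 1 -> False.
Proof. move=> A0; rewrite ltr_pdivrMr // => h1 h2 h3; nra. Qed.

Lemma aux_d3 {R : realType} (x : R) : x <= 1 -> x / 2 < 1.
Proof. lra. Qed.

Section Cantor.
Context {R : realType} {X : pmetricType R}.
Import metricType_numDomainType.
Variables (S' : set X) (f : X -> X) (delta : R).
Variables (step : X * R -> bool -> X * R) (root : X * R).
Hypothesis Hroot : S' root.1 /\ 0 < root.2.
Hypothesis Hstep : forall p, S' p.1 -> 0 < p.2 ->
   (forall j, S' (step p j).1 /\ 0 < (step p j).2 /\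
      mdist p.1 (step p j).1 + (step p j).2 <= p.2 /\ (step p j).2 <= p.2 / 2) /\
   exists n, forall y z, mdist (step p false).1 y <= (step p false).2 ->
     mdist (step p true).1 z <= (step p true).2 ->
     delta < mdist (iter n f y) (iter n f z).
Hypothesis cX : complete_metric X.

Fixpoint node (k m : nat) : X * R :=
  if k is k'.+1 then step (node k' m./2) (odd m) else root.

Definition pos (k : nat) (t : R) : nat := Num.truncn (t / 2 * 2 ^+ k).

Lemma node_inv k m : S' (node k m).1 /\ 0 < (node k m).2.
Proof.
elim: k m => [|k IH] m /=; first exact: Hroot.
have [a b] := IH m./2; have [H _] := Hstep _ a b.
by have [? [? _]] := H (odd m).
Qed.

Lemma truncn_double (x : R) : (Num.truncn (x * 2))./2 = Num.truncn x.
Proof.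
have [x0|x0] := leP 0 x.
  set n := Num.truncn x.
  have /andP[h1 h2] := truncn_itv x0.
  have [h3|h3] := leP ((n.*2).+1%:R) (x * 2).
    have -> : Num.truncn (x * 2) = (n.*2).+1.
      apply: truncn_def; rewrite h3 /=.
      rewrite -doubleS -muln2 natrM; exact: aux_d1.
    by rewrite (_ : (n.*2).+1 = (true + n.*2)%N) // half_bit_double.
  have -> : Num.truncn (x * 2) = n.*2.
    apply: truncn_def; rewrite h3 andbT.
    by rewrite -muln2 natrM ler_pM2r.
  exact: doubleK.
have x20 : x * 2 < 0 by rewrite pmulr_llt0.
by rewrite !truncn_floor !leNgt x0 x20.
Qed.

Lemma pos_parent k t : (pos k.+1 t)./2 = pos k t.
Proof. by rewrite /pos exprSr mulrA truncn_double. Qed.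

Definition Cs (t : R) (k : nat) := node k (pos k t).

Lemma Cs_succ t k : Cs t k.+1 = step (Cs t k) (odd (pos k.+1 t)).
Proof. by rewrite /Cs /= pos_parent. Qed.

Lemma Cs_0 t k : 0 < (Cs t k).2.
Proof. exact: (node_inv k _).2. Qed.

Lemma Cs_1 t k : mdist (Cs t k).1 (Cs t k.+1).1 + (Cs t k.+1).2 <= (Cs t k).2.
Proof.
rewrite Cs_succ; have [a b] := node_inv k (pos k t).
have [H _] := Hstep (Cs t k) a b.
by have [_ [_ [? _]]] := H (odd (pos k.+1 t)).
Qed.

Lemma Cs_2 t k : (Cs t k.+1).2 <= (Cs t k).2 / 2.
Proof.
rewrite Cs_succ; have [a b] := node_inv k (pos k t).
have [H _] := Hstep (Cs t k) a b.
by have [_ [_ [_ ?]]] := H (odd (pos k.+1 t)).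
Qed.

Lemma h_exists : exists h : R -> X, forall t k, mdist (Cs t k).1 (h t) <= (Cs t k).2.
Proof.
have H t := @chain_limit _ _ (Cs t) (@Cs_0 t) (@Cs_1 t) (@Cs_2 t) cX.
have [h hh] := choice H.
by exists h.
Qed.

Lemma meas_prop (P : Prop) : measurable [set _ : measurableTypeR R | P].
Proof.
case: (pselect P) => p.
  have -> : [set _ : measurableTypeR R | P] = setT by apply/seteqP; split.
  exact: measurableT.
have -> : [set _ : measurableTypeR R | P] = set0 by apply/seteqP; split.
exact: measurable0.
Qed.

Lemma meas_trunc (a : R) (m : nat) : 0 < a ->
  measurable [set t : measurableTypeR R | Num.truncn (t * a) = m].
Proof.
move=> a0; case: m => [|m].
  have -> : [set t : measurableTypeR R | Num.truncn (t * a) = 0%N] =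
      `]-oo, a^-1[%classic.
    apply/seteqP; split => t /=; rewrite in_itv /= -[a^-1]div1r ltr_pdivlMr //.
      by move/truncn0Pn; rewrite -ltNge.
    by move=> h; apply/truncn0Pn; rewrite -ltNge.
  exact: measurable_itv.
have -> : [set t : measurableTypeR R | Num.truncn (t * a) = m.+1] =
    `[m.+1%:R / a, m.+2%:R / a[%classic.
  apply/seteqP; split => t /=; rewrite in_itv /= ler_pdivrMr // ltr_pdivlMr //.
    move=> h; rewrite -truncn_gt_nat -truncn_le_nat h.
    by rewrite ltnSn.
  move=> /andP[h1 h2]; apply/eqP; rewrite eqn_leq truncn_le_nat h2 /=.
  by rewrite truncn_gt_nat h1.
exact: measurable_itv.
Qed.

Lemma h_meas (h : R -> X) (hh : forall t k, mdist (Cs t k).1 (h t) <= (Cs t k).2) :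
  measurable_fun [set: measurableTypeR R] (h : measurableTypeR R -> borel_of X).
Proof.
suff HP : preimage_set_system [set: measurableTypeR R]
    (h : measurableTypeR R -> borel_of X) (@open X) `<=` measurable.
  have M := (@measurability _ _ (measurableTypeR R) (borel_of X) [set: measurableTypeR R] h (@open X : set (set (borel_of X))) erefl HP); exact M.
move=> _ [U oU <-]; rewrite setTI.
have -> : h @^-1` U = \bigcup_k \bigcup_m
    ([set t : measurableTypeR R | pos k t = m] `&`
     [set _ | forall y, mdist (node k m).1 y <= (node k m).2 -> U y]).
  apply/seteqP; split => t /=.
    move=> Uht.
    have [k hk] := (proj1 (@chain_open _ _ (Cs t) (@Cs_2 t) _ (hh t) _ oU)) Uht.
    by exists k => //; exists (pos k t).
  move=> [k _ [m _ [/= E hQ]]].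
  apply: (proj2 (@chain_open _ _ (Cs t) (@Cs_2 t) _ (hh t) _ oU)).
  by exists k; rewrite /Cs E.
apply: bigcupT_measurable => k; apply: bigcupT_measurable => m.
apply: measurableI; last exact: meas_prop.
have -> : [set t : measurableTypeR R | pos k t = m] =
    [set t : measurableTypeR R | Num.truncn (t * (2^-1 * 2 ^+ k)) = m].
  by apply/seteqP; split => t /=; rewrite /pos mulrA.
apply: meas_trunc; by rewrite mulr_gt0 // ?invr_gt0 // exprn_gt0.
Qed.

Lemma pos_sep_lt s t : 0 <= s -> s < t -> exists K, pos K s != pos K t.
Proof.
move=> s0 st.
have ts0 : 0 < t - s by rewrite subr_gt0.
have [K hK] := small_pow 2 (t - s) ts0.
exists K; apply/negP => /eqP E.
have t0 : 0 <= t by apply: le_trans s0 (ltW st).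
have A0 : 0 < 2 ^+ K :> R by rewrite exprn_gt0.
have hs := truncn_itv (x := s / 2 * 2 ^+ K) (mulr_ge0 (divr_ge0 s0 (ler0n _ 2)) (ltW A0)).
have ht := truncn_itv (x := t / 2 * 2 ^+ K) (mulr_ge0 (divr_ge0 t0 (ler0n _ 2)) (ltW A0)).
move: hs ht; rewrite /pos in E; rewrite E => /andP[hs1 _] /andP[_ ht2].
set n := Num.truncn _ in hs1 ht2.
have e : n.+1%:R = n%:R + 1 :> R by rewrite mulrSr.
rewrite e in ht2.
exact: (@aux_d2 R s t _ _ A0 hK hs1 ht2).
Qed.

Lemma pos0 x : 0 <= x -> x <= 1 -> pos 0 x = 0%N.
Proof.
move=> x0 x1; rewrite /pos expr0 mulr1; apply/truncn0Pn; rewrite -ltNge.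
exact: aux_d3.
Qed.

Lemma h_sep (h : R -> X) (hh : forall t k, mdist (Cs t k).1 (h t) <= (Cs t k).2) s t :
  0 <= s <= 1 -> 0 <= t <= 1 -> s <> t ->
  exists n, delta < mdist (iter n f (h s)) (iter n f (h t)).
Proof.
move=> /andP[s0 s1] /andP[t0 t1] st.
have ex : exists K, pos K s != pos K t.
  case: (ltgtP s t) => [lst|lts|est]; first exact: pos_sep_lt.
    by have [K hK] := pos_sep_lt _ _ t0 lts; exists K; rewrite eq_sym.
  by exfalso; apply: st.
case: (@ex_minnP (fun K => pos K s != pos K t) ex) => k0 hk0 hmin.
case: k0 hk0 hmin => [|k] hk0 hmin.
  by move: hk0; rewrite (pos0 _ s0 s1) (pos0 _ t0 t1).
have eqk : pos k s = pos k t.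
  by case: (eqVneq (pos k s) (pos k t)) => [//|ne]; have := hmin _ ne; rewrite ltnn.
have od : odd (pos k.+1 s) != odd (pos k.+1 t).
  apply/negP => /eqP oe; move: hk0.
  rewrite -[pos k.+1 s]odd_double_half -[pos k.+1 t]odd_double_half.
  by rewrite oe !pos_parent eqk eqxx.
have [a b] := node_inv k (pos k s).
have [_ [n hn]] := Hstep (Cs s k) a b.
have hs := hh s k.+1; have ht := hh t k.+1.
rewrite Cs_succ in hs; rewrite Cs_succ in ht.
have CE : Cs t k = Cs s k by rewrite /Cs eqk.
rewrite CE in ht.
exists n.
case E: (odd (pos k.+1 s)) in hs od.
  have Et : odd (pos k.+1 t) = false by move: od; case: (odd _).
  rewrite Et in ht.
  by rewrite metric_sym; exact: hn.
have Et : odd (pos k.+1 t) = true by move: od; case: (odd _).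
rewrite Et in ht.
exact: hn.
Qed.

End Cantor.

Lemma aux_e1 {R : realType} (a b c delta : R) :
  c <= a + b -> a <= delta / 2 -> b <= delta / 2 -> delta < c -> False.
Proof. lra. Qed.

Theorem theorem4p7 (R : realType) (X : pmetricType R) (f : X -> X) :
  polish X -> continuous f ->
  (exists (delta : R) (S : set X),
      0 < delta /\ ~ countable S /\ scrambled f delta S) ->
  exists (mu : probability (borel_of X) R) (eps : R),
    0 < eps /\ forall x : X, mu (Phi f eps x) = 0%E.
Proof.
move=> [cX sX] cf [delta [S [d0 [ncS scS]]]].
have [S' [S'S [[y0 S'y0] perf]]] := perfect_core _ sX ncS.
have sep : forall y z, S' y -> S' z -> y <> z ->
    exists n, delta < mdist (iter n f y) (iter n f z).
  move=> y z Sy Sz yz; have [_ H] := scS y z (S'S _ Sy) (S'S _ Sz) yz.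
  exact: limsup_gt H.
have [step Hstep] := step_exists _ _ _ cf sep perf.
pose root := (y0, 1 : R).
have Hroot : S' root.1 /\ 0 < root.2 by split.
have [h hh] := @h_exists _ _ S' f delta step root Hroot Hstep cX.
have mh := @h_meas _ _ S' f delta step root Hroot Hstep h hh.
pose P := uniform_prob (@ltr01 R).
exists (distribution P (mfun_Sub (mem_set mh))), (delta / 2).
split; first by rewrite divr_gt0.
move=> x.
change (P (h @^-1` Phi f (delta / 2) x) = 0%E).
pose E := h @^-1` Phi f (delta / 2) x.
have uniq : forall s t, E s -> E t -> 0 <= s <= 1 -> 0 <= t <= 1 -> s = t.
  move=> s t Es Et s01 t01; apply: contrapT => st.
  have [n hn] := @h_sep _ _ S' f delta step root Hroot Hstep h hh s t s01 t01 st.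
  have a := Es n; have b := Et n; rewrite metric_sym in b.
  exact: (@aux_e1 R _ _ _ delta (metric_triangle _ (iter n f x) _) a b hn).
rewrite /P /uniform_prob integral_uniform_pdf.
case: (pselect (exists t, E t /\ 0 <= t <= 1)) => [[t0 [Et0 t01]]|nE].
  have -> : (h @^-1` Phi f (delta / 2) x) `&` `[0, 1] = [set t0].
    apply/seteqP; split => t /=.
      by move=> [Et]; rewrite in_itv /= => t01'; exact: uniq.
    by move=> ->; split => //; rewrite in_itv.
  exact: integral_set1.
have -> : (h @^-1` Phi f (delta / 2) x) `&` `[0, 1] = set0.
  apply/seteqP; split => t //=.
  by move=> [Et]; rewrite in_itv /= => t01; apply: nE; exists t.
exact: integral_set0.
Qed.
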